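(* Let $k\ge 2$ be an integer and let $F$ be a graph with chromatic number $\chi(F)=k+1$. For every $\varepsilon>0$ there exists $n_0$ such that every $F$-free graph $G$ on $n\ge n_0$ vertices satisfies \[ \sum_{v\in V(G)} d^2(v)\le \left(1-\frac{1}{k}+\varepsilon\right)^2 n^3. \]
   Context: All graphs are finite and simple; $d(v)$ denotes the degree of $v$. A graph is $F$-free if it contains no subgraph isomorphic to $F$. *)

(* Defs.v *)
From mathcomp Require Import all_boot all_order all_algebra.
From mathcomp Require Import reals.
Set Implicit Arguments. Unset Strict Implicit. Unset Printing Implicit Defensive.
Import Order.TTheory GRing.Theory Num.Theory.

Definition simple_graph (T : finType) (e : rel T) : Prop :=
  symmetric e /\ irreflexive e.

Definition deg (T : finType) (e : rel T) (v : T) : nat := #|[set w | e v w]|.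

Definition colorable (T : finType) (e : rel T) (c : nat) : Prop :=
  exists f : T -> 'I_c, forall x y, e x y -> f x != f y.

Definition chromatic_number_is (T : finType) (e : rel T) (c : nat) : Prop :=
  colorable e c /\ forall c', colorable e c' -> c <= c'.

Definition contains_subgraph (TF : finType) (eF : rel TF)
    (TG : finType) (eG : rel TG) : Prop :=
  exists f : TF -> TG, injective f /\ forall x y, eF x y -> eG (f x) (f y).

Definition F_free (TF : finType) (eF : rel TF) (TG : finType) (eG : rel TG) : Prop :=
  ~ contains_subgraph eF eG.

(* Main.v *)
Require Import Defs.
From mathcomp Require Import all_boot all_order all_algebra.
From mathcomp Require Import reals.
From mathcomp Require Import zify ring lra.
Import Order.TTheory GRing.Theory Num.Theory.
Set Implicit Arguments. Unset Strict Implicit. Unset Printing Implicit Defensive.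

Lemma subset_of_size (T : finType) (B : {set T}) k :
  k <= #|B| -> exists A : {set T}, A \subset B /\ #|A| = k.
Proof.
move=> /card_geqP [s [us ss sB]].
exists [set x in s]; split.
  by apply/subsetP => x; rewrite inE => /sB.
by rewrite cardsE (card_uniqP us).
Qed.

Lemma card_sum (T : finType) (B : {set T}) (P : pred T) :
  #|[set w in B | P w]| = \sum_(w in B) (P w : nat).
Proof.
rewrite -sum1_card big_mkcond /= [RHS]big_mkcond /=.
by apply: eq_bigr => w _; rewrite inE; case: (w \in B); case: (P w).
Qed.

Lemma pigeon (T U : finType) (X : {set T}) (Y : {set U}) (f : T -> U) t :
  (forall x, x \in X -> f x \in Y) -> (t.-1 * #|Y| < #|X|)%N -> 0 < t ->
  exists y, y \in Y /\ t <= #|[set x in X | f x == y]|.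
Proof.
move=> fXY lt t0.
have E : #|X| = \sum_(y in Y) #|[set x in X | f x == y]|.
  rewrite -sum1_card (partition_big f (mem Y)) //=.
  by apply: eq_bigr => y yY; rewrite -sum1_card; apply: eq_bigl => x; rewrite inE.
case: (boolP [exists y in Y, t <= #|[set x in X | f x == y]|]).
  by move=> /exists_inP [y yY Hy]; exists y.
rewrite negb_exists_in => /forall_inP H; exfalso.
have : #|X| <= \sum_(y in Y) t.-1.
  rewrite E; apply: leq_sum => y yY; have := H y yY; rewrite -ltnNge; lia.
rewrite sum_nat_const; lia.
Qed.


Lemma card_bigcup_le (T I : finType) (F : I -> {set T}) :
  #|\bigcup_i F i| <= \sum_i #|F i|.
Proof.
elim/big_rec2: _ => [|i n A _ IH]; first by rewrite cards0.
apply: (leq_trans (leq_card_setU _ _)); lia.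
Qed.

Lemma foldr_const (I : Type) (s : seq I) c : foldr muln 1 [seq c | _ <- s] = c ^ size s.
Proof. by elim: s => //= x s ->; rewrite expnS. Qed.

Section Graph.
Variables (T : finType) (e : rel T).
Hypotheses (esym : symmetric e) (eirr : irreflexive e).

Definition nb (S : {set T}) v := [set w in S | e v w].
Definition condg a b (S : {set T}) := forall v, v \in S -> a * #|S| <= b * #|nb S v|.
Definition blow r t (S : {set T}) := exists P : 'I_r -> {set T},
  (forall i, P i \subset S /\ #|P i| = t) /\
  (forall i j, i != j -> forall u v, u \in P i -> v \in P j -> e u v).

Lemma dcount (A B : {set T}) : \sum_(u in A) #|nb B u| = \sum_(w in B) #|nb A w|.
Proof.
rewrite /nb; under eq_bigr do rewrite card_sum; under [RHS]eq_bigr do rewrite card_sum.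
rewrite exchange_big /=; apply: eq_bigr => w _; apply: eq_bigr => u _; by rewrite esym.
Qed.

Lemma nb_sub S v : nb S v \subset S.
Proof. by apply/subsetP => w; rewrite inE => /andP[]. Qed.

Lemma card_family_draws r (P : 'I_r -> {set T}) t T0 :
  (forall i, #|P i| = T0) ->
  #|[set f : {ffun 'I_r -> {set T}} | [forall i, (f i \subset P i) && (#|f i| == t)]]| = 'C(T0, t) ^ r.
Proof.
move=> HP.
pose F := fun i => [pred A : {set T} | (A \subset P i) && (#|A| == t)].
rewrite (@eq_card _ _ (family F)); last first.
  by move=> f; rewrite inE; apply/forallP/familyP => H i; have := H i.
rewrite card_family.
have -> : [seq #|F i| | i : 'I_r] = [seq 'C(T0, t) | _ <- enum 'I_r].
  apply: eq_map => i; rewrite -(HP i) -cards_draws -cardsE; apply: eq_card => A.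
  by rewrite !inE.
by rewrite foldr_const size_enum_ord.
Qed.

End Graph.


Section Step.
Variables (T : finType) (e : rel T).
Hypotheses (esym : symmetric e) (eirr : irreflexive e).

Lemma step r q t T0 (S : {set T}) : 0 < r -> 0 < q -> 0 < t -> T0 = 2*q*t ->
  blow e r T0 S -> condg e ((r-1)*q + r) (r*q) S ->
  2*q*(r*T0 + t.-1 * 'C(T0,t)^r + 1) <= #|S| -> blow e r.+1 t S.
Proof.
move=> r0 q0 t0 eT0 [P [PS Pc]] cS bigS.
pose good := [set w in S | [forall i, t <= #|nb e (P i) w|]].
have Hup : \sum_(w in S) \sum_i #|nb e (P i) w| <=
    #|good| * (r*T0) + #|S| * ((r-1)*T0 + t.-1).
  rewrite card_sum big_distrl /= -sum_nat_const -big_split /=.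
  apply: leq_sum => w wS.
  case: (boolP [forall i, t <= #|nb e (P i) w|]) => [_|].
    rewrite mul1n; apply: leq_trans (leq_addr _ _).
    apply: leq_trans (_ : \sum_(i < r) T0 <= _); last by rewrite sum_nat_const card_ord.
    apply: leq_sum => i _; rewrite -(proj2 (PS i)); exact/subset_leq_card/nb_sub.
  rewrite negb_forall => /existsP [i0]; rewrite -ltnNge => Hi0; rewrite mul0n add0n.
  rewrite (bigD1 i0) //=.
  have : \sum_(i < r | i != i0) #|nb e (P i) w| <= (r-1)*T0.
    apply: leq_trans (_ : \sum_(i < r | i != i0) T0 <= _).
      apply: leq_sum => i _; rewrite -(proj2 (PS i)); exact/subset_leq_card/nb_sub.
    rewrite sum_nat_const.
    have -> : #|[pred i : 'I_r | i != i0]| = r - 1.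
      by rewrite (cardC1 i0) card_ord; lia.
    done.
  by move=> HH; rewrite addnC; apply: leq_add => //; lia.
have Hlo : r*T0*(((r-1)*q + r)*#|S|) <= (r*q) * \sum_(w in S) \sum_i #|nb e (P i) w|.
  rewrite exchange_big /= big_distrr /=.
  apply: leq_trans (_ : \sum_(i < r) T0 * (((r-1)*q + r)*#|S|) <= _).
    by rewrite sum_nat_const card_ord; lia.
  apply: leq_sum => i _; rewrite -(dcount esym) big_distrr /=.
  rewrite -{1}(proj2 (PS i)) -sum_nat_const; apply: leq_sum => u uP.
  apply: cS; exact: (subsetP (proj1 (PS i))).
set g := #|good| in Hup.
set D := \sum_(w in S) _ in Hup Hlo.
have g2 : #|S| <= 2*q*g.
  subst T0.
  have H1 : 2*t*(((r-1)*q + r)*#|S|) <= 2*q*t*r*g + #|S|*((r-1)*(2*q*t) + t.-1).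
    have : (r*q)*(2*t*(((r-1)*q + r)*#|S|)) <= (r*q)*(2*q*t*r*g + #|S|*((r-1)*(2*q*t) + t.-1)).
      have Hup' := leq_mul (leqnn (r*q)) Hup.
      nia.
    by rewrite leq_pmul2l; [|nia].
  have H2 : t*r*#|S| <= t*r*(2*q*g) by nia.
  by rewrite leq_pmul2l in H2; [|nia].
pose good' := [set w in good | [forall i, w \notin P i]].
have g' : #|good| <= #|good'| + r*T0.
  rewrite -(cardsID good' good) (setIidPr _); last first.
    by apply/subsetP => w; rewrite inE => /andP[].
  rewrite leq_add2l.
  apply: leq_trans (_ : #|\bigcup_i P i| <= _).
    apply/subset_leq_card/subsetP => w; rewrite !inE negb_and => /andP[/orP[]].
      by move=> /negP.
    by rewrite negb_forall => /existsP [i]; rewrite negbK => wi _; apply/bigcupP; exists i.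
  apply: leq_trans (card_bigcup_le _) _.
  by rewrite (eq_bigr (fun _ => T0)) ?sum_nat_const ?card_ord // => i _; case: (PS i).
pose pk w i := odflt set0 [pick A : {set T} | (A \subset nb e (P i) w) && (#|A| == t)].
have pkP : forall w i, w \in good -> pk w i \subset nb e (P i) w /\ #|pk w i| = t.
  move=> w i; rewrite inE => /andP [_ /forallP /(_ i) Hi].
  rewrite /pk; case: pickP => [A /andP [H1 /eqP H2] | H] //=.
  have [A [H1 H2]] := subset_of_size Hi.
  by have := H A; rewrite H1 H2 eqxx.
pose ch w : {ffun 'I_r -> {set T}} := [ffun i => pk w i].
pose Fam := [set f : {ffun 'I_r -> {set T}} | [forall i, (f i \subset P i) && (#|f i| == t)]].
have chF : forall w, w \in good' -> ch w \in Fam.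
  move=> w; rewrite inE => /andP [wg _]; rewrite inE; apply/forallP => i.
  rewrite ffunE; have [H1 H2] := pkP w i wg; rewrite H2 eqxx andbT.
  exact: subset_trans H1 (nb_sub _ _ _).
have cardF : #|Fam| = 'C(T0, t) ^ r.
  by apply: card_family_draws => i; case: (PS i).
have [f0 [f0F Hf0]] : exists f0, f0 \in Fam /\ t <= #|[set w in good' | ch w == f0]|.
  apply: pigeon => //; rewrite cardF; subst T0; nia.
have [W [WS Wt]] := subset_of_size Hf0.
have Wg : forall w, w \in W -> [/\ w \in good, ch w = f0 & forall i, w \notin P i].
  move=> w /(subsetP WS); rewrite !inE => /andP [/andP [/andP [wS H] /forallP H'] /eqP ->].
  by split => //; rewrite ?inE ?wS ?H.
have f0P : forall i, f0 i \subset P i /\ #|f0 i| = t.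
  by move: f0F; rewrite inE => /forallP H i; have /andP [H1 /eqP H2] := H i.
pose Q := fun i : 'I_r.+1 => if unlift ord_max i is Some j then f0 j else W.
exists Q; split.
  move=> i; rewrite /Q; case: unliftP => [j _|_].
    by have [H1 H2] := f0P j; split => //; exact: subset_trans H1 (proj1 (PS j)).
  split => //; apply/subsetP => x /Wg [xg _ _]; move: xg; rewrite inE => /andP [] //.
have cross : forall j u w, u \in f0 j -> w \in W -> e u w.
  move=> j u w uf wW; have [wg chw _] := Wg w wW.
  have [H1 _] := pkP w j wg.
  have : u \in pk w j by rewrite -chw ffunE in uf.
  by move=> /(subsetP H1); rewrite inE esym => /andP [].
move=> i j; rewrite /Q; case: unliftP => [i' ->|->]; case: unliftP => [j' ->|->] //.
- move=> ij u v ui vj; apply: (Pc i' j') => //.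
    by apply: contra ij => /eqP ->.
  by apply: (subsetP (proj1 (f0P i'))).
  by apply: (subsetP (proj1 (f0P j'))).
- by move=> _ u v ui vW; apply: cross ui vW.
- by move=> _ u v uW vj; rewrite esym; apply: cross vj uW.
- by rewrite eqxx.
Qed.
End Step.


Lemma blow0 (T : finType) (e : rel T) r (S : {set T}) : blow e r 0 S.
Proof.
exists (fun _ => set0); split; first by move=> i; rewrite sub0set cards0.
by move=> i j _ u v; rewrite inE.
Qed.

Lemma blow1 (T : finType) (e : rel T) t (S : {set T}) : t <= #|S| -> blow e 1 t S.
Proof.
move=> /subset_of_size [A [AS At]]; exists (fun _ => A); split => //.
by move=> i j; rewrite !ord1 eqxx.
Qed.

Lemma condg_mono (T : finType) (e : rel T) a b a' b' (S : {set T}) :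
  0 < b -> a' * b <= a * b' -> condg e a b S -> condg e a' b' S.
Proof.
move=> b0 H cS v vS; have := cS v vS.
set s := #|S|; set d := #|nb e S v| => H1.
have : b * (a' * s) <= b * (b' * d) by nia.
by rewrite leq_pmul2l.
Qed.

Definition ESprop r q t N := forall (T : finType) (e : rel T), symmetric e -> irreflexive e ->
  forall S : {set T}, N <= #|S| -> condg e ((r-1)*q + r) (r*q) S -> blow e r.+1 t S.

Lemma ES r : 0 < r -> forall q t, 0 < q -> exists N, ESprop r q t N.
Proof.
elim: r => // r IH _ q t q0.
case: (posnP t) => [->|t0].
  by exists 0 => T e _ _ S _ _; apply: blow0.
pose T0 := 2*q*t.
have [N1 HN1] : exists N1, forall (T : finType) (e : rel T), symmetric e -> irreflexive e ->
    forall S : {set T}, N1 <= #|S| -> condg e ((r.+1-1)*q + r.+1) (r.+1*q) S -> blow e r.+1 T0 S.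
  case: (posnP r) => [->|r0].
    by exists T0 => T e _ _ S HS _; apply: blow1.
  have [N1 HN1] := IH r0 q T0 q0; exists N1 => T e es ei S HS cS.
  apply: (HN1 T e es ei S HS); apply: condg_mono cS => //; nia.
exists (maxn N1 (2*q*(r.+1*T0 + t.-1 * 'C(T0,t)^r.+1 + 1))) => T e es ei S.
rewrite geq_max => /andP [H1 H2] cS.
apply: (step es (r:=r.+1) (q:=q) (T0:=T0)) => //.
exact: HN1.
Qed.


Section Del.
Variables (T : finType) (e : rel T).
Hypotheses (esym : symmetric e) (eirr : irreflexive e).

Definition e2 (S : {set T}) := \sum_(v in S) #|nb e S v|.

Lemma nbD1 (S : {set T}) v w : v \in S -> #|nb e S w| = (e w v : nat) + #|nb e (S :\ v) w|.
Proof.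
move=> vS; rewrite (cardsD1 v) /nb !inE vS /=; congr (_ + _); apply: eq_card => x.
by rewrite !inE andbA.
Qed.

Lemma e2_del (S : {set T}) v : v \in S -> e2 S = e2 (S :\ v) + 2 * #|nb e S v|.
Proof.
move=> vS; rewrite /e2 (big_setD1 v vS) /=.
rewrite (eq_bigr (fun w => (e w v : nat) + #|nb e (S :\ v) w|)); last first.
  by move=> w _; apply: nbD1.
rewrite big_split /= -card_sum.
have -> : #|[set w in S :\ v | e w v]| = #|nb e S v|.
  apply: eq_card => x; rewrite /nb !inE esym.
  by case: (x =P v) => [->|]; rewrite ?eirr ?andbF //.
lia.
Qed.

Lemma e2_le (S : {set T}) : e2 S <= #|S| ^ 2.
Proof.
rewrite /e2; apply: leq_trans (_ : \sum_(v in S) #|S| <= _).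
  by apply: leq_sum => v _; apply/subset_leq_card/nb_sub.
by rewrite sum_nat_const.
Qed.

Lemma deletion a b N1 : forall S : {set T},
  (forall S' : {set T}, S' \subset S -> N1 <= #|S'| -> ~ condg e a b S') ->
  b * e2 S <= a * (#|S| ^ 2 + #|S|) + b * N1 ^ 2.
Proof.
move=> S; move Hn : #|S| => n; elim: n S Hn => [|n IH] S Hn H.
  by rewrite /e2; move: Hn => /eqP; rewrite cards_eq0 => /eqP ->; rewrite big_set0; lia.
case: (ltnP n.+1 N1) => [lt|ge].
  have := e2_le S; rewrite Hn => H1.
  have : b * e2 S <= b * N1 ^ 2 by apply: leq_mul => //; apply: leq_trans H1 _; nia.
  lia.
case: (boolP [exists v in S, b * #|nb e S v| < a * #|S|]); last first.
  rewrite negb_exists_in => /forall_inP HH; exfalso.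
  apply: (H S (subxx _)); first by rewrite Hn.
  by move=> v vS; have := HH v vS; rewrite -leqNgt.
move=> /exists_inP [v vS Hv].
have Hn' : #|S :\ v| = n by rewrite (cardsD1 v) vS in Hn; lia.
have := IH (S :\ v) Hn' (fun S' sS' => H S' (subset_trans sS' (subD1set _ _))).
rewrite (e2_del vS); rewrite Hn in Hv.
nia.
Qed.
End Del.


Lemma blow_mono (T : finType) (e : rel T) r t (S S' : {set T}) :
  S' \subset S -> blow e r t S' -> blow e r t S.
Proof.
move=> sS [P [PS Pc]]; exists P; split => // i.
by have [H1 H2] := PS i; split => //; apply: subset_trans H1 sS.
Qed.

Lemma card_lt_ord K m : m <= K -> #|[set i : 'I_K | i < m]| = m.
Proof.
move=> mK; have -> : [set i : 'I_K | i < m] = [set widen_ord mK i | i : 'I_m].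
  apply/setP => i; rewrite inE; apply/idP/imsetP => [im|[j _ ->]] /=; last exact: ltn_ord.
  by exists (Ordinal im) => //; apply: val_inj.
by rewrite card_imset ?card_ord //; by move=> a b /(congr1 val) /= /val_inj.
Qed.

Section Blowup.
Variables (n K : nat) (x : 'I_n -> nat).
Hypothesis xK : forall v, x v <= K.

Definition Sx : {set prod (ordinal n) (ordinal K)} := [set p : prod (ordinal n) (ordinal K) | (nat_of_ord p.2 < x p.1)%N].

Lemma sum_Sx (f : 'I_n -> nat) : \sum_(p in Sx) f p.1 = \sum_v x v * f v.
Proof.
rewrite big_mkcond /=.
transitivity (\sum_v \sum_(i : 'I_K) (if (v,i) \in Sx then f v else 0)).
  by rewrite pair_bigA; apply: eq_bigr => [[v i]] _.
apply: eq_bigr => v _; rewrite -big_mkcond /=.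
rewrite (eq_bigl (fun i : 'I_K => i \in [set i : 'I_K | i < x v])); last by move=> i; rewrite !inE.
by rewrite sum_nat_const card_lt_ord.
Qed.

Lemma card_Sx : #|Sx| = \sum_v x v.
Proof.
by rewrite -sum1_card (sum_Sx (fun _ => 1)); apply: eq_bigr => v _; rewrite muln1.
Qed.

Lemma card_Sx_pred (P : pred 'I_n) : #|[set p in Sx | P p.1]| = \sum_v (P v : nat) * x v.
Proof.
rewrite card_sum (sum_Sx (fun v => (P v : nat))); apply: eq_bigr => v _; by rewrite mulnC.
Qed.
End Blowup.

Section Proj.
Variables (n K : nat) (eG : rel 'I_n).
Hypotheses (es : symmetric eG) (ei : irreflexive eG).
Definition eB : rel ('I_n * 'I_K) := fun p q => eG p.1 q.1.

Lemma eB_sym : symmetric eB. Proof. by move=> p q; rewrite /eB es. Qed.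
Lemma eB_irr : irreflexive eB. Proof. by move=> p; rewrite /eB ei. Qed.

Lemma proj_blow r t S : 0 < K -> blow eB r (t * K) S -> blow eG r t setT.
Proof.
move=> K0 [P [PS Pc]].
have Hc : forall i, t <= #|[set p.1 | p in P i]|.
  move=> i; have : #|P i| <= #|setX [set p.1 | p in P i] [set: 'I_K]|.
    apply/subset_leq_card/subsetP => p pP; rewrite inE /= in_setT andbT.
    by apply/imsetP; exists p.
  rewrite cardsX cardsT card_ord (proj2 (PS i)) leq_pmul2r //.
pose Q i := odflt set0 [pick A : {set 'I_n} | (A \subset [set p.1 | p in P i]) && (#|A| == t)].
have QP : forall i, Q i \subset [set p.1 | p in P i] /\ #|Q i| = t.
  move=> i; rewrite /Q; case: pickP => [A /andP [H1 /eqP H2] | H] //=.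
  have [A [H1 H2]] := subset_of_size (Hc i).
  by have := H A; rewrite H1 H2 eqxx.
exists Q; split; first by move=> i; rewrite subsetT (proj2 (QP i)).
move=> i j ij u v /(subsetP (proj1 (QP i))) /imsetP [p pP ->].
move=> /(subsetP (proj1 (QP j))) /imsetP [p' pP' ->].
exact: (Pc i j ij p p' pP pP').
Qed.

Lemma e2_Sx (x : 'I_n -> nat) : (forall v, x v <= K) ->
  e2 eB (@Sx n K x) = \sum_v x v * \sum_u (eG v u : nat) * x u.
Proof.
move=> xK; rewrite /e2.
rewrite (eq_bigr (fun p => \sum_u (eG p.1 u : nat) * x u)).
  by rewrite (sum_Sx xK (fun v => \sum_u (eG v u : nat) * x u)).
move=> p _; rewrite /nb -(card_Sx_pred xK (eG p.1)); apply: eq_card => q.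
by rewrite !inE.
Qed.
End Proj.


Lemma weighted k q t K : 0 < k -> 0 < q -> 0 < K -> exists N1, forall n (eG : rel 'I_n),
  symmetric eG -> irreflexive eG -> ~ blow eG k.+1 t setT ->
  forall x : 'I_n -> nat, (forall v, x v <= K) ->
  k*q * (\sum_v x v * \sum_u (eG v u : nat) * x u) <=
    ((k-1)*q + k) * ((\sum_v x v)^2 + \sum_v x v) + k*q * N1^2.
Proof.
move=> k0 q0 K0; have [N1 HN] := ES k0 (t * K) q0.
exists N1 => n eG es ei nob x xK.
have H : forall S' : {set 'I_n * 'I_K}, S' \subset @Sx n K x -> N1 <= #|S'| ->
    ~ condg (@eB n K eG) ((k-1)*q + k) (k*q) S'.
  move=> S' _ HS cS; apply: nob.
  apply: (@proj_blow n K eG _ _ S' K0).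
  exact: (HN _ (@eB n K eG) (@eB_sym n K eG es) (@eB_irr n K eG ei) S' HS cS).
have := deletion (@eB_sym n K eG es) (@eB_irr n K eG ei) H.
by rewrite (e2_Sx eG xK) (card_Sx (K:=K) xK).
Qed.

Local Open Scope ring_scope.

Lemma abstract_ineq (R : realType) (a b n m N1 W2 Sdy Syy Sp Sr Sp2 Sr2 Qp Qr : R) :
  0 < a -> 0 < b -> 0 < n -> 0 < m -> 0 <= Sp -> 0 <= Sr -> 0 <= W2 ->
  4 * m * Sdy <= Qp + Qr ->
  b * Qp <= a * (Sp ^+ 2 + Sp) + b * N1 ^+ 2 ->
  b * Qr <= a * (Sr ^+ 2 + Sr) + b * N1 ^+ 2 ->
  Sp ^+ 2 <= n * Sp2 -> Sr ^+ 2 <= n * Sr2 ->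
  Sp2 + Sr2 = 2 * n * m ^+ 2 + 2 * Syy ->
  Sp + Sr <= 6 * m * n ->
  m * b * W2 - (a * n) * n ^+ 2 <= (a * n) * Sdy ->
  (a * n) ^+ 2 * Syy <= m ^+ 2 * b ^+ 2 * W2 ->
  2 * m ^+ 2 * b ^+ 2 * (a * n) * W2 <=
    2 * a * n ^+ 2 * m ^+ 2 * (a * n) ^+ 2 + 4 * b * m * (a * n) ^+ 2 * n ^+ 2
    + (a * n) ^+ 2 * (6 * a * m * n + 2 * b * N1 ^+ 2).
Proof.
move=> a0 b0 n0 m0 Sp0 Sr0 W0 F1 F2 F2' F3 F3' F4 F5 F6 F7.
set D := a * n.
have D0 : 0 < D by apply: mulr_gt0.
have E : 4 * m * b * Sdy <= a * (n * (2 * n * m ^+ 2 + 2 * Syy) + 6 * m * n) + 2 * b * N1 ^+ 2.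
  have E1 : 4 * m * b * Sdy <= b * Qp + b * Qr.
    have := ler_wpM2l (ltW b0) F1; lra.
  have E2 : a * (Sp ^+ 2 + Sp) + a * (Sr ^+ 2 + Sr) <= a * (n * (2 * n * m ^+ 2 + 2 * Syy) + 6 * m * n).
    rewrite -mulrDr; apply: ler_wpM2l; first exact: ltW.
    rewrite -F4; nra.
  lra.
have E' := ler_wpM2l (ltW (mulr_gt0 D0 D0)) E.
have G1 : 4 * m * b * D * (m * b * W2 - D * n ^+ 2) <= 4 * m * b * D * (D * Sdy).
  apply: ler_wpM2l => //; apply: mulr_ge0; [nra| exact: ltW].
have G2 : 2 * a * n * (D ^+ 2 * Syy) <= 2 * a * n * (m ^+ 2 * b ^+ 2 * W2).
  apply: ler_wpM2l => //; nra.
rewrite /D in E' G1 G2 *.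
nra.
Qed.

Lemma eqle (R : realType) (x y : R) : x = y -> x <= y. Proof. by move->. Qed.

Lemma final_num (R : realType) (al b n m N1 W2 c eps : R) :
  0 < al -> al <= 1 -> 0 < b -> 0 < n -> 1 <= m -> 1/2 <= c -> 0 < eps ->
  al <= c + eps / 4 -> 8 <= eps * m -> 12 <= eps * n -> 4 * N1 ^+ 2 <= eps * n ^+ 2 ->
  2 * m ^+ 2 * b ^+ 2 * ((al * b) * n) * W2 <=
    2 * (al * b) * n ^+ 2 * m ^+ 2 * ((al * b) * n) ^+ 2 + 4 * b * m * ((al * b) * n) ^+ 2 * n ^+ 2
    + ((al * b) * n) ^+ 2 * (6 * (al * b) * m * n + 2 * b * N1 ^+ 2) ->
  W2 <= (c + eps) ^+ 2 * n ^+ 3.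
Proof.
move=> a0 a1 b0 n0 m1 c2 e0 ac em en eN H.
have m0 : 0 < m by lra.
have P : 0 < 2 * b ^+ 3 * al * n by apply: mulr_gt0 => //; apply: mulr_gt0 => //; apply: mulr_gt0 => //; apply: exprn_gt0.
have H1 : m ^+ 2 * W2 <= al ^+ 2 * n ^+ 3 * m ^+ 2 + 2 * al * n ^+ 3 * m + 3 * al ^+ 2 * n ^+ 2 * m + al * n * N1 ^+ 2.
  rewrite -(ler_pM2l P); apply: (le_trans _ (le_trans H _)); apply: eqle; ring.
have H2 : al ^+ 2 <= (c + eps / 4) ^+ 2 by nra.
have H3 : (c + eps / 4) ^+ 2 + 3 * eps / 4 <= (c + eps) ^+ 2 by nra.
have nn : 0 <= n ^+ 2 by apply: exprn_ge0; lra.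
have nnn : 0 <= n ^+ 3 by apply: exprn_ge0; lra.
have T1 : 2 * al * n ^+ 3 * m <= eps / 4 * m ^+ 2 * n ^+ 3.
  have : 2 * al * m <= eps / 4 * m ^+ 2 by nra.
  move=> h; apply: (le_trans _ (le_trans (ler_wpM2r nnn h) _)); apply: eqle; ring.
have T2 : 3 * al ^+ 2 * n ^+ 2 * m <= eps / 4 * m ^+ 2 * n ^+ 3.
  have h : 3 * al ^+ 2 * m <= eps / 4 * m ^+ 2 * n.
    have : al ^+ 2 <= 1 by nra.
    nra.
  apply: (le_trans _ (le_trans (ler_wpM2r nn h) _)); apply: eqle; ring.
have T3 : al * n * N1 ^+ 2 <= eps / 4 * m ^+ 2 * n ^+ 3.
  have h : al * N1 ^+ 2 <= eps / 4 * m ^+ 2 * n ^+ 2.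
    have : N1 ^+ 2 <= eps / 4 * n ^+ 2 by lra.
    have : 1 <= m ^+ 2 by nra.
    have : 0 <= N1 ^+ 2 by apply: sqr_ge0.
    nra.
  apply: (le_trans _ (le_trans (ler_wpM2r (ltW n0) h) _)); apply: eqle; ring.
have H4 : m ^+ 2 * W2 <= m ^+ 2 * ((c + eps) ^+ 2 * n ^+ 3).
  have : al ^+ 2 * n ^+ 3 * m ^+ 2 <= (c + eps / 4) ^+ 2 * n ^+ 3 * m ^+ 2.
    apply: ler_wpM2r; [nra|]; apply: ler_wpM2r => //.
  have : ((c + eps / 4) ^+ 2 + 3 * eps / 4) * n ^+ 3 * m ^+ 2 <= (c + eps) ^+ 2 * n ^+ 3 * m ^+ 2.
    apply: ler_wpM2r; [nra|]; apply: ler_wpM2r => //.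
  nra.
by rewrite ler_pM2l in H4; [|apply: exprn_gt0].
Qed.


Definition Qn n (eG : rel 'I_n) (x : 'I_n -> nat) : nat :=
  (\sum_v x v * \sum_u (eG v u : nat) * x u)%N.

Lemma cs_sum (R : realType) n (z : 'I_n -> R) :
  (\sum_v z v) ^+ 2 <= n%:R * \sum_v z v ^+ 2.
Proof.
have E1 : (\sum_v z v) ^+ 2 = \sum_u \sum_v z u * z v.
  by rewrite expr2 big_distrl /=; apply: eq_bigr => u _; rewrite big_distrr.
have E2 : \sum_u \sum_v (z u ^+ 2 + z v ^+ 2) = 2 * (n%:R * \sum_v z v ^+ 2).
  rewrite (eq_bigr (fun u => n%:R * z u ^+ 2 + \sum_v z v ^+ 2)); last first.
    by move=> u _; rewrite big_split /= sumr_const card_ord mulr_natl.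
  rewrite big_split /= sumr_const card_ord -mulr_sumr; rewrite mulr_natl; ring.
have H : 2 * (\sum_u \sum_v z u * z v) <= \sum_u \sum_v (z u ^+ 2 + z v ^+ 2).
  rewrite mulr_sumr; apply: ler_sum => u _; rewrite mulr_sumr; apply: ler_sum => v _.
  have := sqr_ge0 (z u - z v); lra.
rewrite E1; lra.
Qed.


Lemma deg_sum n (eG : rel 'I_n) v : deg eG v = (\sum_u (eG v u : nat))%N.
Proof.
rewrite /deg -sum1_card big_mkcond /=; apply: eq_bigr => u _; by rewrite inE; case: (eG v u).
Qed.

Lemma deg_le n (eG : rel 'I_n) v : (deg eG v <= n)%N.
Proof. by rewrite /deg; apply: leq_trans (max_card _) _; rewrite card_ord. Qed.

Lemma pt_ineq (m y1 y2 : nat) :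
  (2 * m * (y1 + y2) <= (m + y1) * (m + y2) + (m - y1 + (y1 - m)) * (m - y2 + (y2 - m)))%N.
Proof.
case: (leqP y1 m) => h1; case: (leqP y2 m) => h2.
- have -> : (y1 - m = 0)%N by lia. have -> : (y2 - m = 0)%N by lia.
  have E1 : (m - y1 + y1 = m)%N by lia. have E2 : (m - y2 + y2 = m)%N by lia.
  nia.
- have -> : (y1 - m = 0)%N by lia. have -> : (m - y2 = 0)%N by lia. nia.
- have -> : (m - y1 = 0)%N by lia. have -> : (y2 - m = 0)%N by lia. nia.
- have -> : (m - y1 = 0)%N by lia. have -> : (m - y2 = 0)%N by lia.
  have E1 : (y1 - m + m = y1)%N by lia. have E2 : (y2 - m + m = y2)%N by lia.
  nia.
Qed.

Lemma pt_sq (m y : nat) : ((m + y) ^ 2 + (m - y + (y - m)) ^ 2 = 2 * m ^ 2 + 2 * y ^ 2)%N.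
Proof.
case: (leqP y m) => h.
- have -> : (y - m = 0)%N by lia. have E : (m - y + y = m)%N by lia. nia.
- have -> : (m - y = 0)%N by lia. have E : (y - m + m = y)%N by lia. nia.
Qed.

Lemma W2_le (R : realType) n (eG : rel 'I_n) (a b m N1 : nat) (c eps : R) :
  symmetric eG -> (0 < n)%N -> (0 < a)%N -> (a <= b)%N -> (b <= 2 * a)%N -> (0 < m)%N ->
  (forall x : 'I_n -> nat, (forall v, x v <= 3 * m)%N ->
     (b * Qn eG x <= a * ((\sum_v x v) ^ 2 + \sum_v x v) + b * N1 ^ 2)%N) ->
  1/2 <= c -> 0 < eps -> a%:R / b%:R <= c + eps / 4 -> 8 <= eps * m%:R ->
  12 <= eps * n%:R -> 4 * N1%:R ^+ 2 <= eps * n%:R ^+ 2 ->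
  \sum_v ((deg eG v) ^ 2)%:R <= (c + eps) ^+ 2 * n%:R ^+ 3 :> R.
Proof.
move=> es n0 a0 ab ba m0 HQ c2 e0 ac em en eN.
pose d v := deg eG v.
pose y v := (m * b * d v %/ (a * n))%N.
have an0 : (0 < a * n)%N by rewrite muln_gt0 a0.
have y1 : forall v, (y v * (a * n) <= m * b * d v)%N by move=> v; apply: leq_trunc_div.
have y2 : forall v, (m * b * d v < (y v).+1 * (a * n))%N by move=> v; apply: ltn_ceil.
have yb : forall v, (y v <= 2 * m)%N.
  move=> v; have h := y1 v; have dn : (d v <= n)%N by apply: deg_le.
  have h2 := leq_mul (leq_mul (leqnn m) ba) dn.
  have : (y v * (a * n) <= 2 * m * (a * n))%N.
    apply: leq_trans h _; apply: leq_trans h2 _; lia.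
  by rewrite leq_pmul2r.
pose p v := (m + y v)%N.
pose r v := (m - y v + (y v - m))%N.
have pb : forall v, (p v <= 3 * m)%N by move=> v; have := yb v; rewrite /p; lia.
have rb : forall v, (r v <= 3 * m)%N by move=> v; have := yb v; rewrite /r; lia.
have Hp := HQ p pb.
have Hr := HQ r rb.
have dS : forall v, d v = (\sum_u (eG v u : nat))%N by move=> v; apply: deg_sum.
have F1 : (4 * m * (\sum_v d v * y v) <= Qn eG p + Qn eG r)%N.
  have E : (Qn eG p + Qn eG r = \sum_v \sum_u (eG v u : nat) * (p v * p u + r v * r u))%N.
    rewrite /Qn -big_split; apply: eq_bigr => v _ /=.
    rewrite !big_distrr -big_split; apply: eq_bigr => u _ /=; lia.
  have Sym : (\sum_v \sum_u (eG v u : nat) * (2 * m * (y v + y u)) = 4 * m * (\sum_v d v * y v))%N.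
    have E1 : (\sum_v \sum_u (eG v u : nat) * (2 * m * (y v + y u)) =
       2 * m * (\sum_v \sum_u (eG v u : nat) * y v) + 2 * m * (\sum_v \sum_u (eG v u : nat) * y u))%N.
      rewrite !big_distrr -big_split; apply: eq_bigr => v _ /=.
      rewrite !big_distrr -big_split; apply: eq_bigr => u _ /=; lia.
    have E2 : (\sum_v \sum_u (eG v u : nat) * y v = \sum_v d v * y v)%N.
      by apply: eq_bigr => v _; rewrite dS big_distrl.
    have E3 : (\sum_v \sum_u (eG v u : nat) * y u = \sum_v d v * y v)%N.
      rewrite exchange_big; apply: eq_bigr => u _ /=; rewrite dS big_distrl /=.
      by apply: eq_bigr => v _; rewrite es.
    rewrite E1 E2 E3; lia.
  rewrite E -Sym; apply: leq_sum => v _; apply: leq_sum => u _; apply: leq_mul => //.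
  exact: pt_ineq.
have F3p : ((\sum_v p v) ^ 2 <= n * \sum_v p v ^ 2)%N.
  rewrite -(ler_nat R) natrX natrM !natr_sum.
  apply: le_trans (cs_sum _) _; apply: eqle; congr (_ * _); apply: eq_bigr => v _; by rewrite natrX.
have F3r : ((\sum_v r v) ^ 2 <= n * \sum_v r v ^ 2)%N.
  rewrite -(ler_nat R) natrX natrM !natr_sum.
  apply: le_trans (cs_sum _) _; apply: eqle; congr (_ * _); apply: eq_bigr => v _; by rewrite natrX.
have F4 : (\sum_v p v ^ 2 + \sum_v r v ^ 2 = 2 * n * m ^ 2 + 2 * \sum_v y v ^ 2)%N.
  rewrite -big_split /= (eq_bigr (fun v => 2 * m ^ 2 + 2 * y v ^ 2)%N); last by move=> v _; apply: pt_sq.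
  by rewrite big_split /= sum_nat_const card_ord -big_distrr /=; lia.
have F5 : (\sum_v p v + \sum_v r v <= 6 * m * n)%N.
  rewrite -big_split /=; apply: leq_trans (_ : \sum_(v < n) (6 * m)%N <= _)%N.
    by apply: leq_sum => v _; have := yb v; rewrite /p /r; lia.
  by rewrite sum_nat_const card_ord; lia.
have F6 : (m * b * \sum_v d v ^ 2 <= a * n * \sum_v d v * y v + a * n * (n * n))%N.
  have : (\sum_v d v <= n * n)%N.
    apply: leq_trans (_ : \sum_(v < n) n <= _)%N; first by apply: leq_sum => v _; apply: deg_le.
    by rewrite sum_nat_const card_ord.
  move=> Sd; apply: leq_trans (_ : a * n * \sum_v d v * y v + a * n * \sum_v d v <= _)%N; last first.
    by rewrite leq_add2l leq_mul2l Sd orbT.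
  rewrite !big_distrr -big_split /=; apply: leq_sum => v _.
  have := y2 v; nia.
have F7 : ((a * n) ^ 2 * \sum_v y v ^ 2 <= m ^ 2 * b ^ 2 * \sum_v d v ^ 2)%N.
  rewrite !big_distrr; apply: leq_sum => v _; have := y1 v => h.
  have := leq_mul h h; rewrite !expnS !expn0 !muln1 => H2. change ((a * n * (a * n)) * (y v * y v) <= (m * m * (b * b)) * (d v * d v))%N. nia.
have castle : forall x1 x2 : nat, (x1 <= x2)%N -> x1%:R <= x2%:R :> R by move=> x1 x2; rewrite ler_nat.
have R1 := castle _ _ F1; rewrite ?(natrX, natrD, natrM) in R1.
have R2 := castle _ _ Hp; rewrite ?(natrX, natrD, natrM) in R2.
have R2' := castle _ _ Hr; rewrite ?(natrX, natrD, natrM) in R2'.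
have R3 := castle _ _ F3p; rewrite ?(natrX, natrD, natrM) in R3.
have R3' := castle _ _ F3r; rewrite ?(natrX, natrD, natrM) in R3'.
have R5 := castle _ _ F5; rewrite ?(natrX, natrD, natrM) in R5.
have R6 := castle _ _ F6; rewrite ?(natrX, natrD, natrM) in R6.
have R7 := castle _ _ F7; rewrite ?(natrX, natrD, natrM) in R7.
have R4 := congr1 (fun z : nat => z%:R : R) F4; move: R4; rewrite ?(natrX, natrD, natrM) => R4.
have pos : forall z : nat, (0 < z)%N -> 0 < z%:R :> R by move=> z; rewrite ltr0n.
have nn : forall z : nat, 0 <= z%:R :> R by move=> z; apply: ler0n.
have H := @abstract_ineq R _ _ _ _ _ _ _ _ _ _ _ _ _ _ (pos _ a0) (pos _ (leq_trans a0 ab)) (pos _ n0) (pos _ m0)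
  (nn _) (nn _) (nn _) R1 R2 R2' R3 R3' R4 R5 _ R7.
have {}H : 2 * m%:R ^+ 2 * b%:R ^+ 2 * (a%:R * n%:R) * (\sum_v d v ^ 2)%N%:R <=
    2 * a%:R * n%:R ^+ 2 * m%:R ^+ 2 * (a%:R * n%:R) ^+ 2 + 4 * b%:R * m%:R * (a%:R * n%:R) ^+ 2 * n%:R ^+ 2
    + (a%:R * n%:R) ^+ 2 * (6 * a%:R * m%:R * n%:R + 2 * b%:R * N1%:R ^+ 2) :> R.
  by apply: H; rewrite expr2; lra.
set al := a%:R / b%:R : R.
have b0' : b%:R != 0 :> R by rewrite pnatr_eq0 -lt0n (leq_trans a0 ab).
have Ea : a%:R = al * b%:R :> R by rewrite /al divfK.
rewrite Ea in H.
rewrite -natr_sum.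
apply: (@final_num R al b%:R n%:R m%:R N1%:R _ c eps).
- by rewrite /al divr_gt0 // ?pos // (leq_trans a0 ab).
- by rewrite /al ler_pdivrMr ?mul1r ?ler_nat // pos // (leq_trans a0 ab).
- exact: pos _ (leq_trans a0 ab).
- exact: pos _ n0.
- by rewrite ler1n.
- exact: c2.
- exact: e0.
- exact: ac.
- exact: em.
- exact: en.
- exact: eN.
- exact: H.
Qed.


Lemma nat_above (R : realType) (x : R) : exists N : nat, x <= N%:R.
Proof.
case: (lerP 0 x) => [x0|x0]; last by exists 0%N; rewrite ltW.
by exists (Num.bound x); apply: ltW; apply: archi_boundP.
Qed.

Lemma embed (TF : finType) (eF : rel TF) n (eG : rel 'I_n) k :
  irreflexive eG -> colorable eF k.+1 -> blow eG k.+1 #|TF| setT -> contains_subgraph eF eG.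
Proof.
move=> ei [col colP] [P [PS Pc]].
pose h i (x : TF) : 'I_n := enum_val (cast_ord (esym (proj2 (PS i))) (enum_rank x)).
have hP : forall i x, h i x \in P i by move=> i x; apply: enum_valP.
have hinj : forall i x y, h i x = h i y -> x = y.
  by move=> i x y /enum_val_inj /cast_ord_inj /enum_rank_inj.
exists (fun x => h (col x) x); split.
  move=> x y Exy; case: (col x =P col y) => [C|C].
    by move: Exy; rewrite /= C => /hinj.
  exfalso; have := Pc (col x) (col y) (introN eqP C) _ _ (hP (col x) x) (hP (col y) y).
  by rewrite Exy ei.
move=> x y exy; exact: (Pc (col x) (col y) (colP x y exy) _ _ (hP (col x) x) (hP (col y) y)).
Qed.

Lemma from_div (R : realType) (x c eps : R) : 0 < eps -> c / eps <= x -> c <= eps * x.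
Proof. by move=> e0; rewrite ler_pdivrMr // mulrC. Qed.

Unset Implicit Arguments.

Theorem corollary2p15 (R : realType) (k : nat) (TF : finType) (eF : rel TF) :
  (2 <= k)%N -> simple_graph eF -> chromatic_number_is eF k.+1 ->
  forall eps : R, 0 < eps ->
  exists n0 : nat, forall (n : nat) (eG : rel 'I_n),
    (n0 <= n)%N -> simple_graph eG -> F_free eF eG ->
    \sum_(v : 'I_n) ((deg eG v) ^ 2)%:R <= (1 - 1 / k%:R + eps) ^+ 2 * n%:R ^+ 3.
Proof.
move=> k2 _ [colF _] eps e0.
set t := #|TF|.
have k0 : (0 < k)%N by lia.
have kR : 0 < k%:R :> R by rewrite ltr0n.
have [Nq HNq] := nat_above (4 / eps).
pose q := maxn k Nq.
have q0 : (0 < q)%N by rewrite /q; lia.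
have qR : 0 < q%:R :> R by rewrite ltr0n.
have [Nm HNm] := nat_above (8 / eps).
pose m := maxn 1 Nm.
have m0 : (0 < m)%N by rewrite /m; lia.
have m3 : (0 < 3 * m)%N by lia.
have [N1 HN1] := weighted t k0 q0 m3.
have [M1 HM1] := nat_above (12 / eps).
have [M2 HM2] := nat_above (4 * N1%:R ^+ 2 / eps).
exists (maxn 1 (maxn M1 M2)) => n eG; rewrite !geq_max => /andP [n1 /andP [nM1 nM2]] [es ei] Ffree.
have nob : ~ blow eG k.+1 t setT by move=> hb; apply: Ffree; apply: (embed ei colF hb).
apply: (@W2_le R n eG ((k - 1) * q + k) (k * q) m N1 (1 - 1 / k%:R) eps es) => //.
- by rewrite addn_gt0 k0 orbT.
- rewrite mulnBl mul1n; have : (k <= q)%N by rewrite /q leq_maxl. nia.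
- nia.
- by move=> x xK; exact: (HN1 n eG es ei nob x xK).
- have kk : 2 <= k%:R :> R by rewrite ler_nat.
  have H : k%:R * (1 / k%:R) = 1 :> R by rewrite mul1r mulfV // gt_eqF.
  have H0 : 0 <= 1 / k%:R :> R by rewrite div1r invr_ge0 ltW.
  nra.
- have E : ((k - 1) * q + k)%:R / (k * q)%:R = 1 - 1 / k%:R + 1 / q%:R :> R.
    rewrite natrD natrM natrB // natrM; field.
    by rewrite !gt_eqF.
  rewrite E.
  have H : q%:R * (1 / q%:R) = 1 :> R by rewrite mul1r mulfV // gt_eqF.
  have H0 : 0 <= 1 / q%:R :> R by rewrite div1r invr_ge0 ltW.
  have H1 : 4 <= eps * q%:R.
    apply: from_div => //; apply: le_trans HNq _; rewrite ler_nat /q; lia.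
  nra.
- apply: from_div => //; apply: le_trans HNm _; rewrite ler_nat /m; lia.
- apply: from_div => //; apply: le_trans HM1 _; rewrite ler_nat; lia.
- have H1 : 4 * N1%:R ^+ 2 <= eps * n%:R by apply: from_div => //; apply: le_trans HM2 _; rewrite ler_nat; lia.
  have H2 : n%:R <= n%:R ^+ 2 :> R by rewrite expr2 ler_peMl ?ler0n // ler1n.
  apply: le_trans H1 _; apply: ler_wpM2l; [exact: ltW | exact: H2].
Qed.
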